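(* Let $(u,v)$ be the solution of (1.1) with initial data satisfying $(H_\infty)$, and for $\epsilon>0$ let $w^\epsilon(t,x)=-\epsilon\log u(t/\epsilon,x/\epsilon)$ on $[0,\infty)\times\mathbb{R}$. Then for each compact set $Q\subset\big((0,\infty)\times\mathbb{R}\big)\cup\big(\{0\}\times(-\infty,0)\big)$ there is a constant $C(Q)>0$, independent of $\epsilon$, such that $0\le w^\epsilon(t,x)\le C(Q)$ for all $(t,x)\in Q$ and all $\epsilon\in(0,1/C(Q)]$.
   Context: System (1.1): $\partial_t u-\partial_{xx}u=u(1-u-av)$, $\partial_t v-d\,\partial_{xx}v=rv(1-bu-v)$ for $(t,x)\in(0,\infty)\times\mathbb{R}$, with $u(0,x)=u_0(x)$, $v(0,x)=v_0(x)$, where $d,r>0$ and $a,b\in(0,1)$ are constants. Hypothesis $(H_\infty)$: $u_0,v_0\in C(\mathbb{R};[0,1])$; there exist constants $\theta_0>0$, $x_0>0$ such that $\theta_0\le u_0(x)\le1$ for $x\le 0$ and $u_0(x)=0$ for $x\ge x_0$; $v_0$ is not identically zero and has compact support. (Here $-\log 0=+\infty$.) *)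

(* Defs.v *)
From Stdlib Require Import Reals Lra.
Open Scope R_scope.

Definition cont2_at_in (D : R -> R -> Prop) (f : R -> R -> R) (t x : R) : Prop :=
  forall eps, 0 < eps -> exists delta, 0 < delta /\
    forall s y, D s y -> Rabs (s - t) < delta -> Rabs (y - x) < delta ->
      Rabs (f s y - f t x) < eps.

Definition closed_half (s y : R) : Prop := 0 <= s.
Definition open_half (s y : R) : Prop := 0 < s.

Definition C12 (w wt wx wxx : R -> R -> R) : Prop :=
  (forall t x, 0 <= t -> cont2_at_in closed_half w t x) /\
  (forall t x, 0 < t ->
     derivable_pt_lim (fun s => w s x) t (wt t x) /\
     derivable_pt_lim (fun y => w t y) x (wx t x) /\
     derivable_pt_lim (fun y => wx t y) x (wxx t x)) /\
  (forall t x, 0 < t -> cont2_at_in open_half wt t x /\ cont2_at_in open_half wxx t x).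

Definition is_solution_11 (d r a b : R) (u0 v0 : R -> R) (u v : R -> R -> R) : Prop :=
  exists ut ux uxx vt vx vxx : R -> R -> R,
    C12 u ut ux uxx /\ C12 v vt vx vxx /\
    (forall t x, 0 < t -> ut t x - uxx t x = u t x * (1 - u t x - a * v t x)) /\
    (forall t x, 0 < t -> vt t x - d * vxx t x = r * v t x * (1 - b * u t x - v t x)) /\
    (forall x, u 0 x = u0 x) /\ (forall x, v 0 x = v0 x) /\
    (exists M, forall t x, 0 <= t -> Rabs (u t x) <= M /\ Rabs (v t x) <= M).

Definition H_infty (u0 v0 : R -> R) : Prop :=
  continuity u0 /\ continuity v0 /\
  (forall x, 0 <= u0 x <= 1) /\ (forall x, 0 <= v0 x <= 1) /\
  (exists theta0 x0, 0 < theta0 /\ 0 < x0 /\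
     (forall x, x <= 0 -> theta0 <= u0 x <= 1) /\
     (forall x, x0 <= x -> u0 x = 0)) /\
  (exists x, v0 x <> 0) /\
  (exists K, forall x, K < Rabs x -> v0 x = 0).

(* Topology of R^2 (max-norm balls, which induce the Euclidean topology). *)
Definition open2 (U : R * R -> Prop) : Prop :=
  forall p, U p -> exists e, 0 < e /\
    forall q, Rabs (fst q - fst p) < e -> Rabs (snd q - snd p) < e -> U q.

Definition compact2 (Q : R * R -> Prop) : Prop :=
  forall (I : Type) (U : I -> R * R -> Prop),
    (forall i, open2 (U i)) ->
    (forall p, Q p -> exists i, U i p) ->
    exists l : list I, forall p, Q p -> exists i, List.In i l /\ U i p.

(* Main.v *)
Require Import Defs.
From Stdlib Require Import Reals.
From Stdlib Require Import Lra ClassicalEpsilon Classical List.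
From Coquelicot Require Import Coquelicot.
Open Scope R_scope.

Lemma Rmax0_lip : forall u t, Rabs (Rmax 0 u - Rmax 0 t) <= Rabs (u - t).
Proof.
  intros u t; unfold Rmax; destruct (Rle_dec 0 u); destruct (Rle_dec 0 t);
  unfold Rabs; repeat destruct Rcase_abs; lra.
Qed.

Lemma cont_rel_2d (w : R -> R -> R) :
  (forall t x, 0 <= t -> cont2_at_in closed_half w t x) ->
  forall t x, continuity_2d_pt (fun s y => w (Rmax 0 s) y) t x.
Proof.
  intros Hw t x eps.
  destruct (Hw (Rmax 0 t) x (Rmax_l 0 t) eps (cond_pos eps)) as [d [Hd Hd']].
  exists (mkposreal d Hd); simpl; intros u v Hu Hv.
  apply Hd'; [unfold closed_half; apply Rmax_l | | exact Hv].
  eapply Rle_lt_trans; [apply Rmax0_lip | exact Hu].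
Qed.

Lemma cont2d_x (F : R -> R -> R) t x :
  continuity_2d_pt F t x -> continuity_pt (F t) x.
Proof.
  intros H. unfold continuity_pt, continue_in, limit1_in, limit_in. simpl.
  intros eps Heps. destruct (H (mkposreal eps Heps)) as [d Hd].
  exists d; split; [apply cond_pos|]. intros y [_ Hy].
  unfold R_dist in *. apply Hd; [rewrite Rminus_diag, Rabs_R0; apply cond_pos | exact Hy].
Qed.

Lemma EVT2 (F : R -> R -> R) a b c d :
  a <= b -> c <= d -> (forall t x, continuity_2d_pt F t x) ->
  exists t0 x0, a <= t0 <= b /\ c <= x0 <= d /\
    forall t x, a <= t <= b -> c <= x <= d -> F t0 x0 <= F t x.
Proof.
  intros Hab Hcd HF.
  assert (H1 : forall t, exists x0, (forall y, c <= y <= d -> F t x0 <= F t y) /\ c <= x0 <= d).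
  { intro t. apply continuity_ab_min; [exact Hcd|]. intros y _. apply cont2d_x, HF. }
  set (xm := fun t => proj1_sig (constructive_indefinite_description _ (H1 t))).
  assert (Hxm : forall t, (forall y, c <= y <= d -> F t (xm t) <= F t y) /\ c <= xm t <= d).
  { intro t. unfold xm. destruct (constructive_indefinite_description _ (H1 t)); simpl; auto. }
  set (m := fun t => F t (xm t)).
  assert (Hm : forall t0, a <= t0 <= b -> continuity_pt m t0).
  { intros t0 Ht0. unfold continuity_pt, continue_in, limit1_in, limit_in. simpl.
    intros eps Heps.
    destruct (uniform_continuity_2d F (a-1) (b+1) c d (fun x y _ _ => HF x y) (mkposreal eps Heps))
      as [del Hdel].
    exists (Rmin del 1); split; [apply Rmin_pos; [apply cond_pos|lra]|].
    intros t [_ Ht]. unfold R_dist in *.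
    assert (Hmin1 := Rmin_l del 1). assert (Hmin2 := Rmin_r del 1).
    assert (Htt : a - 1 <= t <= b + 1) by (unfold Rabs in Ht; destruct Rcase_abs; lra).
    destruct (Hxm t) as [Ht1 Ht2]. destruct (Hxm t0) as [Ht01 Ht02].
    assert (A1 : Rabs (F t (xm t0) - F t0 (xm t0)) < eps).
    { apply Hdel; try lra. rewrite Rminus_diag, Rabs_R0; apply cond_pos. }
    assert (A2 : Rabs (F t0 (xm t) - F t (xm t)) < eps).
    { apply Hdel; try lra. rewrite Rabs_minus_sym; lra. rewrite Rminus_diag, Rabs_R0; apply cond_pos. }
    assert (B1 := Ht1 (xm t0) Ht02). assert (B2 := Ht01 (xm t) Ht2).
    unfold m. revert A1 A2 B1 B2. unfold Rabs; repeat destruct Rcase_abs; intros; lra. }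
  destruct (continuity_ab_min m a b Hab Hm) as [t0 [Ht0' Ht0]].
  exists t0, (xm t0). destruct (Hxm t0) as [_ Hx0]. split; [|split]; auto.
  intros t x Ht Hx. eapply Rle_trans; [apply (Ht0' t Ht)|]. apply (proj1 (Hxm t)); auto.
Qed.

Lemma min_left (f : R -> R) t l rho :
  derivable_pt_lim f t l -> 0 < rho ->
  (forall s, t - rho < s <= t -> f t <= f s) -> l <= 0.
Proof.
  intros Hd Hr Hm. destruct (Rle_or_lt l 0) as [|Hl]; [auto|exfalso].
  destruct (Hd (l/2) ltac:(lra)) as [d Hd'].
  set (h := - Rmin (d/2) (rho/2)).
  assert (Hd0 := cond_pos d).
  assert (Hh1 : h < 0) by (unfold h; assert (0 < Rmin (d/2) (rho/2)) by (apply Rmin_pos; lra); lra).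
  assert (Hh2 : Rabs h < d).
  { rewrite Rabs_left by lra. unfold h. assert (Rmin (d/2) (rho/2) <= d/2) by apply Rmin_l. lra. }
  specialize (Hd' h ltac:(lra) Hh2).
  assert (Hs : f t <= f (t + h)).
  { apply Hm. unfold h in *. assert (Rmin (d/2) (rho/2) <= rho/2) by apply Rmin_r. lra. }
  assert (Hq : 0 <= (f (t+h) - f t) / h * (-1)). 
  { unfold Rdiv. replace ((f (t + h) - f t) * / h * -1) with ((f (t + h) - f t) * / (-h)) by (field; lra).
    apply Rmult_le_pos; [lra|]. left; apply Rinv_0_lt_compat; lra. }
  revert Hd' Hq. unfold Rabs; destruct Rcase_abs; intros; lra.
Qed.

Lemma min_right (f : R -> R) t l rho :
  derivable_pt_lim f t l -> 0 < rho ->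
  (forall s, t <= s < t + rho -> f t <= f s) -> 0 <= l.
Proof.
  intros Hd Hr Hm.
  assert (Hd2 : derivable_pt_lim (fun s => f (- s)) (- t) (- l)).
  { replace (- l) with (l * (-1)) by ring.
    apply (derivable_pt_lim_comp (fun s => - s) f (-t) (-1) l).
    - replace (-1) with (- (1)) by ring. apply derivable_pt_lim_opp, derivable_pt_lim_id.
    - rewrite Ropp_involutive; exact Hd. }
  assert (- l <= 0).
  { apply (min_left _ _ _ rho Hd2 Hr). intros s Hs. rewrite Ropp_involutive. apply Hm; lra. }
  lra.
Qed.

Lemma min_second (f g : R -> R) x a rho :
  0 < rho ->
  (forall y, Rabs (y - x) < rho -> derivable_pt_lim f y (g y)) ->
  derivable_pt_lim g x a ->
  (forall y, Rabs (y - x) < rho -> f x <= f y) -> 0 <= a.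
Proof.
  intros Hr Hf Hg Hm.
  assert (Hfx : derivable_pt_lim f x (g x)) by (apply Hf; rewrite Rminus_diag, Rabs_R0; lra).
  assert (G1 : g x <= 0).
  { apply (min_left f x _ rho Hfx Hr). intros s Hs. apply Hm. unfold Rabs; destruct Rcase_abs; lra. }
  assert (G2 : 0 <= g x).
  { apply (min_right f x _ rho Hfx Hr). intros s Hs. apply Hm. unfold Rabs; destruct Rcase_abs; lra. }
  assert (Hg0 : g x = 0) by lra.
  destruct (Rle_or_lt 0 a) as [|Ha]; [auto|exfalso].
  destruct (Hg (-a/2) ltac:(lra)) as [d Hd].
  assert (Hd0 := cond_pos d).
  set (h0 := Rmin (d/2) (rho/2)).
  assert (Hh0 : 0 < h0) by (apply Rmin_pos; lra).
  assert (Hh0d : h0 <= d/2) by apply Rmin_l. assert (Hh0r : h0 <= rho/2) by apply Rmin_r.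
  destruct (MVT_cor2 f g x (x + h0)) as [c [Hc1 Hc2]]; [lra| |].
  { intros c Hc. apply Hf. unfold Rabs; destruct Rcase_abs; lra. }
  assert (Hgc : g c < 0).
  { specialize (Hd (c - x) ltac:(lra) ltac:(rewrite Rabs_right by lra; lra)).
    replace (x + (c - x)) with c in Hd by ring. rewrite Hg0 in Hd.
    assert (Hq : (g c - 0) / (c - x) < a / 2) by (revert Hd; unfold Rabs; destruct Rcase_abs; intros; lra).
    destruct (Rle_or_lt 0 (g c)) as [Hgc|]; [|auto].
    assert (0 <= (g c - 0) / (c - x)).
    { unfold Rdiv; apply Rmult_le_pos; [lra|left; apply Rinv_0_lt_compat; lra]. }
    lra. }
  assert (f x <= f (x + h0)) by (apply Hm; rewrite Rabs_right by lra; lra).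
  assert (g c * (x + h0 - x) < 0) by (apply Rmult_neg_pos; lra).
  lra.
Qed.
Lemma der_eq (f : R -> R) x l l' : is_derive f x l -> l = l' -> is_derive f x l'.
Proof. intros H ->; exact H. Qed.
Lemma D1 (h : R -> R) t dh lam del A B :
  derivable_pt_lim h t dh ->
  derivable_pt_lim (fun s => exp(-lam*s) * h s + del*(A + B*s)) t (exp(-lam*t)*(dh - lam*h t) + del*B).
Proof.
  intro H. apply is_derive_Reals in H. apply is_derive_Reals.
  eapply der_eq.
  apply (is_derive_plus (fun s => exp(-lam*s) * h s) (fun s => del*(A+B*s))).
  apply (is_derive_mult (fun s => exp(-lam*s)) h). auto_derive; auto. exact H. intros; apply Rmult_comm.
  auto_derive; auto. simpl. unfold plus, mult; simpl. ring.
Qed.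
Lemma D2 (h : R -> R) y dh E del C :
  derivable_pt_lim h y dh ->
  derivable_pt_lim (fun y => E * h y + del*(y*y + C)) y (E*dh + del*(2*y)).
Proof.
  intro H. apply is_derive_Reals in H. apply is_derive_Reals.
  eapply der_eq.
  apply (is_derive_plus (fun s => E * h s) (fun s => del*(s*s+C))).
  apply (is_derive_mult (fun _ => E) h). auto_derive; auto. exact H. intros; apply Rmult_comm.
  auto_derive; auto. simpl. unfold plus, mult; simpl. ring.
Qed.
Lemma D3 (h : R -> R) y dh E del :
  derivable_pt_lim h y dh ->
  derivable_pt_lim (fun y => E * h y + del*(2*y)) y (E*dh + del*2).
Proof.
  intro H. apply is_derive_Reals in H. apply is_derive_Reals.
  eapply der_eq.
  apply (is_derive_plus (fun s => E * h s) (fun s => del*(2*s))).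
  apply (is_derive_mult (fun _ => E) h). auto_derive; auto. exact H. intros; apply Rmult_comm.
  auto_derive; auto. simpl. unfold plus, mult; simpl. ring.
Qed.

Lemma MP (w : R -> R -> R) (D K M : R) :
  0 < D ->
  (forall t x, 0 <= t -> cont2_at_in closed_half w t x) ->
  (forall t x, 0 <= t -> - M <= w t x) ->
  (forall x, 0 <= w 0 x) ->
  (forall t x, 0 < t -> w t x < 0 ->
     exists wt wxx (g : R -> R) rho, 0 < rho /\
       derivable_pt_lim (fun s => w s x) t wt /\
       (forall y, Rabs (y - x) < rho -> derivable_pt_lim (fun y => w t y) y (g y)) /\
       derivable_pt_lim g x wxx /\ K * w t x <= wt - D * wxx) ->
  forall t x, 0 <= t -> 0 <= w t x.
Proof.
  intros HD Hc HM H0 Hpde T X HT.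
  destruct (Rle_or_lt 0 (w T X)) as [|HwT]; [auto|exfalso].
  assert (HT0 : 0 < T) by (destruct HT as [|<-]; [auto| specialize (H0 X); lra]).
  assert (HMp : 0 < M) by (specialize (HM T X HT); lra).
  set (lam := Rabs K + 1).
  assert (HKl : K < lam) by (unfold lam; assert (K <= Rabs K) by apply RRle_abs; lra).
  set (W := fun s y => w (Rmax 0 s) y).
  assert (HWc : forall s y, continuity_2d_pt W s y) by (apply cont_rel_2d; exact Hc).
  assert (HW : forall s y, 0 <= s -> W s y = w s y) by (intros; unfold W; rewrite Rmax_right; auto).
  set (q := - exp(-lam*T) * w T X).
  assert (Hq : 0 < q).
  { unfold q. assert (0 < exp (-lam*T)) by apply exp_pos.
    assert (0 < exp (-lam*T) * (- w T X)) by (apply Rmult_lt_0_compat; lra). lra. }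
  set (S := X*X + (2*D+1)*T + 1).
  assert (HS : 0 < S) by (unfold S; assert (0 <= X*X) by nra; nra).
  set (del := q / (2 * S)).
  assert (Hdel : 0 < del) by (unfold del; apply Rdiv_lt_0_compat; lra).
  set (Rr := M/del + Rabs X + 1).
  assert (HMd : del * (M / del) = M) by (field; lra).
  assert (HMd0 : 0 < M / del) by (apply Rdiv_lt_0_compat; lra).
  assert (HX0 := Rabs_pos X).
  set (Y := fun s y => exp(-lam*s) * W s y + del*(y*y + (2*D+1)*s)).
  assert (HYc : forall s y, continuity_2d_pt Y s y).
  { intros s y. unfold Y. apply continuity_2d_pt_plus.
    - apply continuity_2d_pt_mult; [|apply HWc].
      apply (continuity_1d_2d_pt_comp exp (fun s _ => -lam*s)).
      apply (derivable_continuous _ derivable_exp).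
      apply continuity_2d_pt_mult; [apply continuity_2d_pt_const|apply continuity_2d_pt_id1].
    - apply continuity_2d_pt_mult; [apply continuity_2d_pt_const|].
      apply continuity_2d_pt_plus.
      + apply continuity_2d_pt_mult; apply continuity_2d_pt_id2.
      + apply continuity_2d_pt_mult; [apply continuity_2d_pt_const|apply continuity_2d_pt_id1]. }
  assert (HYs : forall s y, 0 <= s -> Y s y = exp(-lam*s) * w s y + del*(y*y + (2*D+1)*s)).
  { intros; unfold Y; rewrite HW; auto. }
  assert (HYTX : Y T X < 0).
  { rewrite HYs by lra.
    assert (Hlt : del * (X*X + (2*D+1)*T) < q).
    { unfold del. unfold Rdiv. 
      assert (q * / (2*S) * (X*X + (2*D+1)*T) = q * ((X*X + (2*D+1)*T) / (2*S))) by (field; lra).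
      rewrite H. assert ((X*X + (2*D+1)*T) / (2*S) < 1).
      { unfold Rdiv. assert (Hi : 0 < /(2*S)) by (apply Rinv_0_lt_compat; lra).
        assert (Hi2 : 2*S * /(2*S) = 1) by (field; lra).
        assert (X*X + (2*D+1)*T < 2*S) by (unfold S; nra). nra. }
      nra. }
    unfold q in Hlt. nra. }
  destruct (EVT2 Y 0 T (-Rr) Rr ltac:(lra) ltac:(unfold Rr; lra) HYc) as [t0 [x0 [Ht0 [Hx0 Hmin]]]].
  assert (HXa1 : X <= Rabs X) by apply RRle_abs.
  assert (HXa2 : -X <= Rabs X) by (rewrite <- Rabs_Ropp; apply RRle_abs).
  assert (HXr : -Rr <= X <= Rr) by (unfold Rr; lra).
  assert (HY0 : Y t0 x0 < 0) by (specialize (Hmin T X ltac:(lra) HXr); lra).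
  assert (Hlow : forall s y, 0 <= s -> - M <= exp(-lam*s) * w s y).
  { intros s y Hs. assert (0 < exp(-lam*s)) by apply exp_pos.
    assert (exp(-lam*s) <= 1).
    { rewrite <- exp_0. destruct (Req_dec s 0) as [->|]. right; f_equal; ring.
      left; apply exp_increasing. assert (0 < lam) by (unfold lam; assert (0 <= Rabs K) by apply Rabs_pos; lra). nra. }
    specialize (HM s y Hs). destruct (Rle_or_lt 0 (w s y)). nra.
    assert (exp (-lam*s) * w s y >= w s y) by nra. lra. }
  assert (Ht0p : 0 < t0).
  { destruct Ht0 as [[|<-] _]; [auto|]. rewrite HYs in HY0 by lra.
    rewrite Rmult_0_r, exp_0, Rmult_1_l in HY0. specialize (H0 x0). nra. }
  assert (Hx0in : Rabs x0 < Rr).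
  { destruct (Rle_or_lt Rr (Rabs x0)) as [Hb|]; [exfalso|auto].
    rewrite HYs in HY0 by lra. specialize (Hlow t0 x0 ltac:(lra)).
    assert (Rabs x0 * Rabs x0 = x0 * x0) by (rewrite <- Rabs_mult; apply Rabs_right; nra).
    assert (Rr <= x0*x0) by (unfold Rr in *; nra).
    assert (del * Rr <= del * (x0 * x0)) by (apply Rmult_le_compat_l; lra).
    assert (del * Rr > M) by (unfold Rr; nra).
    assert (0 <= del * ((2*D+1)*t0)) by (apply Rmult_le_pos; nra).
    nra. }
  assert (HE := exp_pos (-lam*t0)).
  assert (Hwt0 : w t0 x0 < 0).
  { rewrite HYs in HY0 by lra. destruct (Rle_or_lt 0 (w t0 x0)); [|auto].
    assert (0 <= del * (x0*x0 + (2*D+1)*t0)) by (apply Rmult_le_pos; nra). nra. }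
  destruct (Hpde t0 x0 Ht0p Hwt0) as [wt [wxx [g [rho [Hrho [Hdt [Hdx [Hdxx Hineq]]]]]]]].
  assert (Ht : exp(-lam*t0)*(wt - lam*w t0 x0) + del*(2*D+1) <= 0).
  { apply (min_left (fun s => exp(-lam*s) * w s x0 + del*(x0*x0 + (2*D+1)*s)) t0 _ t0).
    apply (D1 (fun s => w s x0)); exact Hdt. exact Ht0p.
    intros s Hs. rewrite <- !HYs by lra. apply Hmin; lra. }
  set (rho2 := Rmin rho (Rr - Rabs x0)).
  assert (Hrho2 : 0 < rho2) by (apply Rmin_pos; lra).
  assert (Hr1 : rho2 <= rho) by apply Rmin_l. assert (Hr2 : rho2 <= Rr - Rabs x0) by apply Rmin_r.
  assert (Hx : 0 <= exp(-lam*t0)*wxx + del*2).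
  { apply (min_second (fun y => exp(-lam*t0) * w t0 y + del*(y*y + (2*D+1)*t0))
        (fun y => exp(-lam*t0) * g y + del*(2*y)) x0 _ rho2 Hrho2).
    - intros y Hy. apply (D2 (fun y => w t0 y)). apply Hdx. lra.
    - apply (D3 g); exact Hdxx.
    - intros y Hy. rewrite <- !HYs by lra. apply Hmin; [lra|].
      revert Hy Hr2. unfold Rabs; repeat destruct Rcase_abs; intros; lra. }
  assert (Hpos : 0 < exp(-lam*t0) * ((K - lam) * w t0 x0)).
  { apply Rmult_lt_0_compat; [lra|]. nra. }
  assert (exp(-lam*t0) * ((K - lam) * w t0 x0) <= exp(-lam*t0) * (wt - D*wxx - lam * w t0 x0)).
  { apply Rmult_le_compat_l; lra. }
  assert (HDx : 0 <= D * (exp(-lam*t0)*wxx + del*2)) by (apply Rmult_le_pos; lra).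
  nra.
Qed.

Definition hm (th : R) := (PI + Rabs th - Rabs (PI - Rabs th)) / 2.
Definition hcut (th : R) := (cos (hm th) + Rabs (cos (hm th))) / 2.

Lemma hcut_cont : forall th, continuity_pt hcut th.
Proof.
  intro th. unfold hcut, hm.
  assert (Hc : continuity cos) by apply (derivable_continuous _ derivable_cos).
  assert (Ha := Rcontinuity_abs).
  assert (H1 : continuity (fun th => cos ((PI + Rabs th - Rabs (PI - Rabs th)) / 2))).
  { apply (continuity_comp (fun th => (PI + Rabs th - Rabs (PI - Rabs th)) / 2) cos).
    2: exact Hc.
    intro x. unfold Rdiv. apply continuity_pt_mult; [|apply continuity_pt_const; intros a b; reflexivity].
    apply continuity_pt_minus. apply continuity_pt_plus. apply continuity_pt_const; intros a b; reflexivity. apply Ha.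
    apply (continuity_pt_comp (fun th => PI - Rabs th) Rabs). apply continuity_pt_minus. apply continuity_pt_const; intros a b; reflexivity. apply Ha. apply Ha. }
  unfold Rdiv. apply continuity_pt_mult; [|apply continuity_pt_const; intros a b; reflexivity].
  apply continuity_pt_plus. apply H1. apply (continuity_pt_comp _ Rabs). apply H1. apply Ha.
Qed.

Lemma hm_small th : Rabs th <= PI -> cos (hm th) = cos th.
Proof.
  intro H. unfold hm. rewrite (Rabs_right (PI - Rabs th)) by lra.
  replace ((PI + Rabs th - (PI - Rabs th)) / 2) with (Rabs th) by field.
  unfold Rabs; destruct Rcase_abs; [apply cos_neg|reflexivity].
Qed.

Lemma hcut_bounds th : 0 <= hcut th <= 1.
Proof.
  unfold hcut. destruct (COS_bound (hm th)). unfold Rabs; destruct Rcase_abs; lra.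
Qed.

Lemma hcut_eq th : Rabs th < PI/2 -> hcut th = cos th.
Proof.
  intro H. assert (PI > 0) by apply PI_RGT_0.
  unfold hcut. rewrite hm_small by lra.
  assert (0 < cos th).
  { apply cos_gt_0; revert H; unfold Rabs; destruct Rcase_abs; lra. }
  rewrite Rabs_right by lra. field.
Qed.

Lemma hcut_pos th : 0 < hcut th -> Rabs th < PI/2.
Proof.
  intro H. assert (PI > 0) by apply PI_RGT_0.
  destruct (Rlt_or_le (Rabs th) (PI/2)) as [|H2]; [auto|exfalso].
  unfold hcut in H.
  assert (cos (hm th) <= 0).
  { destruct (Rle_or_lt (Rabs th) PI).
    - rewrite hm_small by auto.
      assert (cos (Rabs th) <= 0) by (apply cos_le_0; lra).
      assert (cos (Rabs th) = cos th) by (unfold Rabs; destruct Rcase_abs; [apply cos_neg|reflexivity]).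
      lra.
    - unfold hm. rewrite (Rabs_left (PI - Rabs th)) by lra.
      replace ((PI + Rabs th - - (PI - Rabs th)) / 2) with PI by field.
      rewrite cos_PI; lra. }
  revert H; rewrite Rabs_left1 by lra; lra.
Qed.

Lemma hcut_half th : Rabs th <= PI/4 -> 1/2 <= hcut th.
Proof.
  intro H. assert (PI > 0) by apply PI_RGT_0.
  rewrite hcut_eq by lra.
  assert (Hc1 : cos (PI/4) <= cos (Rabs th)) by (apply cos_decr_1; try lra; apply Rabs_pos).
  assert (Hc2 : cos (Rabs th) = cos th) by (unfold Rabs; destruct Rcase_abs; [apply cos_neg|reflexivity]).
  rewrite cos_PI4 in Hc1.
  assert (Hs := Rlt_sqrt2_0). assert (Hs2 := sqrt_sqrt 2 ltac:(lra)).
  assert (sqrt 2 < 2) by nra.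
  assert (1/2 < 1 / sqrt 2).
  { unfold Rdiv; rewrite !Rmult_1_l. apply Rinv_lt_contravar; nra. }
  lra.
Qed.

Definition xi c kap s y := y - c*s + PI/(2*kap).
Definition fsub A mu c kap s y :=
  A * exp(-mu*s) * exp(-c*xi c kap s y/2) * cos(kap * xi c kap s y).
Definition fsub_y A mu c kap s y :=
  A * exp(-mu*s) * exp(-c*xi c kap s y/2) * (-(c/2)*cos(kap * xi c kap s y) - kap*sin(kap * xi c kap s y)).

Lemma fsub_ds A mu c kap s y :
  derivable_pt_lim (fun s => fsub A mu c kap s y) s
    (A * exp(-mu*s) * exp(-c*xi c kap s y/2) *
      ((-mu + c^2/2)*cos(kap * xi c kap s y) + kap*c*sin(kap * xi c kap s y))).
Proof.
  apply is_derive_Reals. unfold fsub, xi, Rminus, Rdiv. auto_derive; auto. ring.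
Qed.

Lemma fsub_dy A mu c kap s y :
  derivable_pt_lim (fun y => fsub A mu c kap s y) y (fsub_y A mu c kap s y).
Proof.
  apply is_derive_Reals. unfold fsub, fsub_y, xi, Rminus, Rdiv. auto_derive; auto. ring.
Qed.

Lemma fsub_dyy A mu c kap s y :
  derivable_pt_lim (fun y => fsub_y A mu c kap s y) y
    (A * exp(-mu*s) * exp(-c*xi c kap s y/2) *
      ((c^2/4 - kap^2)*cos(kap * xi c kap s y) + c*kap*sin(kap * xi c kap s y))).
Proof.
  apply is_derive_Reals. unfold fsub_y, xi, Rminus, Rdiv. auto_derive; auto. field.
Qed.

Lemma exp_le x y : x <= y -> exp x <= exp y.
Proof. intros [H| ->]; [left; apply exp_increasing; auto| right; reflexivity]. Qed.

Lemma deriv_loc (f g : R -> R) t l rho :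
  derivable_pt_lim f t l -> 0 < rho ->
  (forall s, Rabs (s - t) < rho -> f s = g s) -> derivable_pt_lim g t l.
Proof.
  intros Hf Hr Heq eps Heps. destruct (Hf eps Heps) as [d Hd].
  assert (Hd0 := cond_pos d).
  exists (mkposreal (Rmin d rho) (Rmin_pos _ _ Hd0 Hr)). simpl. intros h Hh Hhd.
  assert (Rmin d rho <= d) by apply Rmin_l. assert (Rmin d rho <= rho) by apply Rmin_r.
  rewrite <- !Heq. apply Hd; auto; lra.
  rewrite Rminus_diag, Rabs_R0; auto.
  replace (t + h - t) with h by ring. lra.
Qed.

Lemma deriv_minus (f g : R -> R) t l1 l2 :
  derivable_pt_lim f t l1 -> derivable_pt_lim g t l2 ->
  derivable_pt_lim (fun s => f s - g s) t (l1 - l2).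
Proof. intros H1 H2. apply (derivable_pt_lim_minus f g t l1 l2 H1 H2). Qed.

Lemma deriv_cminus (f : R -> R) t l C :
  derivable_pt_lim f t l -> derivable_pt_lim (fun s => C - f s) t (- l).
Proof.
  intros H. replace (- l) with (0 - l) by ring.
  apply deriv_minus; auto. apply derivable_pt_lim_const.
Qed.

Lemma cont_rel_minus (u z : R -> R -> R) :
  (forall t x, 0 <= t -> cont2_at_in closed_half u t x) ->
  (forall t x, continuity_2d_pt z t x) ->
  forall t x, 0 <= t -> cont2_at_in closed_half (fun s y => u s y - z s y) t x.
Proof.
  intros Hu Hz t x Ht eps Heps.
  destruct (Hu t x Ht (eps/2) ltac:(lra)) as [d1 [Hd1 H1]].
  destruct (Hz t x (mkposreal (eps/2) ltac:(lra))) as [d2 H2].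
  assert (Hd2 := cond_pos d2).
  exists (Rmin d1 d2); split; [apply Rmin_pos; lra|].
  intros s y Hsy Hs Hy.
  assert (Rmin d1 d2 <= d1) by apply Rmin_l. assert (Rmin d1 d2 <= d2) by apply Rmin_r.
  specialize (H1 s y Hsy ltac:(lra) ltac:(lra)). specialize (H2 s y ltac:(lra) ltac:(lra)). simpl in H2.
  revert H1 H2. unfold Rabs; repeat destruct Rcase_abs; intros; lra.
Qed.

Lemma sol_bounds (d r a b : R) (u0 v0 : R -> R) (u v : R -> R -> R) :
  0 < d -> 0 < r -> 0 < a < 1 -> 0 < b < 1 ->
  H_infty u0 v0 ->
  is_solution_11 d r a b u0 v0 u v ->
  exists M, 0 <= M /\ forall t x, 0 <= t -> 0 <= u t x <= 1 /\ 0 <= v t x <= M.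
Proof.
  intros Hd Hr Ha Hb [Hu0c [Hv0c [Hu0 [Hv0 _]]]]
    [ut [ux [uxx [vt [vx [vxx [Cu [Cv [Pu [Pv [Iu [Iv [M0 HM0]]]]]]]]]]]]].
  destruct Cu as [Cu1 [Cu2 _]]. destruct Cv as [Cv1 [Cv2 _]].
  assert (HM0p : 0 <= M0) by (destruct (HM0 0 0 (Rle_refl 0)) as [H _]; eapply Rle_trans; [apply Rabs_pos|exact H]).
  assert (Bu : forall t x, 0 <= t -> -M0 <= u t x <= M0).
  { intros t x Ht. destruct (HM0 t x Ht) as [H _]. revert H; unfold Rabs; destruct Rcase_abs; lra. }
  assert (Bv : forall t x, 0 <= t -> -M0 <= v t x <= M0).
  { intros t x Ht. destruct (HM0 t x Ht) as [_ H]. revert H; unfold Rabs; destruct Rcase_abs; lra. }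
  assert (Vpos : forall t x, 0 <= t -> 0 <= v t x).
  { apply (MP v d (r * (1 + b*M0 + M0)) M0 Hd Cv1).
    - intros t x Ht; apply Bv; auto.
    - intro x; rewrite Iv; apply Hv0.
    - intros t x Ht Hneg. destruct (Cv2 t x Ht) as [D1 [D2 D3]].
      exists (vt t x), (vxx t x), (vx t), 1. split; [lra|]. split; [exact D1|]. split.
      + intros y _. destruct (Cv2 t y Ht) as [_ [E _]]. exact E.
      + split; [exact D3|]. rewrite Pv by auto.
        assert (Hbu := Bu t x ltac:(lra)).
        assert (Hbv := Bv t x ltac:(lra)).
        assert (0 <= b * (u t x + M0)) by (apply Rmult_le_pos; lra).
        assert (H1 : 1 - b * u t x - v t x <= 1 + b*M0 + M0) by nra.
        assert (H2 : r * (1 - b * u t x - v t x) <= r * (1 + b*M0 + M0)) by (apply Rmult_le_compat_l; lra).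
        assert (Hp : 0 <= (r*(1+b*M0+M0) - r*(1 - b*u t x - v t x)) * (- v t x)) by (apply Rmult_le_pos; lra).
        nra. }
  assert (Upos : forall t x, 0 <= t -> 0 <= u t x).
  { apply (MP u 1 (1 + 2*M0) M0 ltac:(lra) Cu1).
    - intros t x Ht; apply Bu; auto.
    - intro x; rewrite Iu; apply Hu0.
    - intros t x Ht Hneg. destruct (Cu2 t x Ht) as [D1 [D2 D3]].
      exists (ut t x), (uxx t x), (ux t), 1. split; [lra|]. split; [exact D1|]. split.
      + intros y _. destruct (Cu2 t y Ht) as [_ [E _]]. exact E.
      + split; [exact D3|]. replace (ut t x - 1 * uxx t x) with (ut t x - uxx t x) by ring.
        rewrite Pu by auto.
        assert (Hbu := Bu t x ltac:(lra)). assert (Hv := Vpos t x ltac:(lra)).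
        assert (Hbv := Bv t x ltac:(lra)).
        assert (H1 : 1 - u t x - a * v t x <= 1 + 2*M0) by nra.
        assert (Hp : 0 <= ((1 + 2*M0) - (1 - u t x - a * v t x)) * (- u t x)) by (apply Rmult_le_pos; lra).
        nra. }
  assert (Ule : forall t x, 0 <= t -> 0 <= 1 - u t x).
  { apply (MP (fun t x => 1 - u t x) 1 0 M0 ltac:(lra)).
    - intros t x Ht eps Heps. destruct (Cu1 t x Ht eps Heps) as [dl [Hdl H]].
      exists dl; split; auto. intros s y H1 H2 H3. specialize (H s y H1 H2 H3).
      replace (1 - u s y - (1 - u t x)) with (- (u s y - u t x)) by ring. rewrite Rabs_Ropp; auto.
    - intros t x Ht. specialize (Bu t x Ht). lra.
    - intro x. rewrite Iu. specialize (Hu0 x). lra.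
    - intros t x Ht Hneg. destruct (Cu2 t x Ht) as [D1 [D2 D3]].
      exists (- ut t x), (- uxx t x), (fun y => - ux t y), 1. split; [lra|]. split.
      { apply (deriv_cminus (fun s => u s x)); exact D1. }
      split.
      + intros y _. destruct (Cu2 t y Ht) as [_ [E _]]. apply (deriv_cminus (fun y => u t y)); exact E.
      + split. { apply (derivable_pt_lim_opp (ux t)); exact D3. }
        replace (- ut t x - 1 * - uxx t x) with (- (ut t x - uxx t x)) by ring.
        rewrite Pu by auto.
        assert (Hv := Vpos t x ltac:(lra)).
        assert (0 <= a * v t x) by nra.
        nra. }
  exists M0. split; auto. intros t x Ht.
  specialize (Ule t x Ht). specialize (Upos t x Ht). specialize (Vpos t x Ht). specialize (Bv t x Ht).
  repeat split; lra.
Qed.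

Definition zsub A mu c kap s y :=
  A * exp(-mu*s) * exp(-c*xi c kap s y/2) * hcut(kap * xi c kap s y).

Lemma xi_cont c kap s y : continuity_2d_pt (fun s y => xi c kap s y) s y.
Proof.
  unfold xi. apply continuity_2d_pt_plus; [apply continuity_2d_pt_minus|apply continuity_2d_pt_const].
  apply continuity_2d_pt_id2.
  apply continuity_2d_pt_mult; [apply continuity_2d_pt_const|apply continuity_2d_pt_id1].
Qed.

Lemma zsub_cont A mu c kap s y : continuity_2d_pt (zsub A mu c kap) s y.
Proof.
  unfold zsub.
  assert (He : continuity exp) by apply (derivable_continuous _ derivable_exp).
  apply continuity_2d_pt_mult; [apply continuity_2d_pt_mult; [apply continuity_2d_pt_mult|]|].
  - apply continuity_2d_pt_const.
  - apply (continuity_1d_2d_pt_comp exp (fun s _ => -mu*s)); [apply He|].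
    apply continuity_2d_pt_mult; [apply continuity_2d_pt_const|apply continuity_2d_pt_id1].
  - apply (continuity_1d_2d_pt_comp exp (fun s y => -c * xi c kap s y/2)); [apply He|].
    unfold Rdiv. apply continuity_2d_pt_mult; [|apply continuity_2d_pt_const].
    apply continuity_2d_pt_mult; [apply continuity_2d_pt_const|apply xi_cont].
  - apply (continuity_1d_2d_pt_comp hcut (fun s y => kap * xi c kap s y)); [apply hcut_cont|].
    apply continuity_2d_pt_mult; [apply continuity_2d_pt_const|apply xi_cont].
Qed.

Lemma zsub_nonneg A mu c kap s y : 0 <= A -> 0 <= zsub A mu c kap s y.
Proof.
  intro HA. unfold zsub. destruct (hcut_bounds (kap * xi c kap s y)).
  assert (H1 := exp_pos (-mu*s)). assert (H2 := exp_pos (-c * xi c kap s y / 2)).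
  apply Rmult_le_pos; [|auto]. apply Rmult_le_pos; [|lra]. apply Rmult_le_pos; lra.
Qed.

Lemma zsub_pos_region A mu c kap s y : 0 < kap ->
  0 < zsub A mu c kap s y -> Rabs (kap * xi c kap s y) < PI/2.
Proof.
  intros Hk H. apply hcut_pos. unfold zsub in H.
  destruct (hcut_bounds (kap * xi c kap s y)) as [[Hh|Hh] _]; [auto|].
  rewrite <- Hh in H. rewrite Rmult_0_r in H. lra.
Qed.

Lemma abs_xi_bound kap X : 0 < kap -> Rabs (kap * X) < PI/2 -> Rabs X < PI/(2*kap).
Proof.
  intros Hk H. rewrite Rabs_mult, (Rabs_right kap) in H by lra.
  apply (Rmult_lt_reg_l kap); [auto|]. replace (kap * (PI / (2*kap))) with (PI/2) by (field; lra). auto.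
Qed.

Lemma cx_bound c X B : Rabs X <= B -> - c * X / 2 <= Rabs c * B / 2.
Proof.
  intro H. assert (Rabs (c*X) <= Rabs c * B) by (rewrite Rabs_mult; apply Rmult_le_compat_l; [apply Rabs_pos|auto]).
  assert (- (c*X) <= Rabs (c*X)) by (rewrite <- Rabs_Ropp; apply RRle_abs). lra.
Qed.

Lemma cx_lbound c X B : Rabs X <= B -> - (Rabs c * B / 2) <= - c * X / 2.
Proof.
  intro H. assert (Rabs (c*X) <= Rabs c * B) by (rewrite Rabs_mult; apply Rmult_le_compat_l; [apply Rabs_pos|auto]).
  assert ((c*X) <= Rabs (c*X)) by (apply RRle_abs). lra.
Qed.

Lemma zsub_le th mu c kap s y : 0 < kap -> 0 < th -> 0 <= mu -> 0 <= s ->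
  zsub (th * exp (- (Rabs c * PI / (4*kap)))) mu c kap s y <= th.
Proof.
  intros Hk Hth Hmu Hs. set (A := th * exp (- (Rabs c * PI / (4*kap)))).
  assert (HA : 0 < A) by (unfold A; apply Rmult_lt_0_compat; [auto|apply exp_pos]).
  destruct (Rle_lt_or_eq_dec 0 _ (zsub_nonneg A mu c kap s y ltac:(lra))) as [Hz|Hz]; [|rewrite <- Hz; lra].
  assert (Hr := zsub_pos_region _ _ _ _ _ _ Hk Hz).
  assert (Hx := abs_xi_bound _ _ Hk Hr).
  assert (Hb := cx_bound c (xi c kap s y) (PI/(2*kap)) ltac:(lra)).
  assert (He2 : exp (-c * xi c kap s y / 2) <= exp (Rabs c * PI / (4*kap))).
  { apply exp_le. replace (Rabs c * PI / (4*kap)) with (Rabs c * (PI/(2*kap)) / 2) by (field; lra). auto. }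
  assert (He1 : exp (-mu*s) <= 1) by (rewrite <- exp_0; apply exp_le; nra).
  assert (HAth : A * exp (Rabs c * PI / (4*kap)) = th).
  { unfold A. rewrite Rmult_assoc, <- exp_plus. replace (- (Rabs c * PI / (4 * kap)) + Rabs c * PI / (4 * kap)) with 0 by ring.
    rewrite exp_0; ring. }
  destruct (hcut_bounds (kap * xi c kap s y)) as [Hh0 Hh1].
  assert (P1 := exp_pos (-mu*s)). assert (P2 := exp_pos (-c * xi c kap s y / 2)).
  unfold zsub.
  assert (A * exp (-mu*s) <= A) by nra.
  assert (A * exp (-mu*s) * exp (-c * xi c kap s y / 2) <= A * exp (Rabs c * PI / (4*kap))).
  { apply Rmult_le_compat; try lra. apply Rmult_le_pos; lra. }
  assert (0 <= A * exp (-mu*s) * exp (-c * xi c kap s y / 2)) by (apply Rmult_le_pos; [apply Rmult_le_pos|]; lra).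
  nra.
Qed.

Lemma zsub_ge th mu c kap s y : 0 < kap -> 0 < th ->
  Rabs (xi c kap s y) <= PI/(4*kap) ->
  th/2 * exp(- Rabs c * PI/(2*kap) - mu*s) <= zsub (th * exp (- (Rabs c * PI / (4*kap)))) mu c kap s y.
Proof.
  intros Hk Hth Hx.
  assert (Hpi := PI_RGT_0).
  assert (Hh : 1/2 <= hcut (kap * xi c kap s y)).
  { apply hcut_half. rewrite Rabs_mult, (Rabs_right kap) by lra.
    replace (PI/4) with (kap * (PI/(4*kap))) by (field; lra). apply Rmult_le_compat_l; lra. }
  assert (Hb := cx_lbound c (xi c kap s y) (PI/(4*kap)) Hx).
  assert (He2 : exp (- (Rabs c * PI / (8*kap))) <= exp (-c * xi c kap s y / 2)).
  { apply exp_le. replace (Rabs c * PI / (8*kap)) with (Rabs c * (PI/(4*kap)) / 2) by (field; lra). auto. }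
  assert (Hc0 := Rabs_pos c).
  assert (Hexp : exp(- Rabs c * PI/(2*kap) - mu*s) <=
     exp (- (Rabs c * PI / (4*kap))) * exp(-mu*s) * exp (- (Rabs c * PI / (8*kap)))).
  { rewrite <- !exp_plus. apply exp_le.
    assert (0 <= Rabs c * PI / (8*kap)) by (apply Rdiv_le_0_compat; nra).
    replace (- Rabs c * PI/(2*kap)) with (- (Rabs c * PI / (4*kap)) - Rabs c * PI / (8*kap) - Rabs c * PI / (8*kap)) by (field; lra).
    lra. }
  unfold zsub.
  assert (P1 := exp_pos (- (Rabs c * PI / (4*kap)))). assert (P2 := exp_pos (-mu*s)).
  assert (P3 := exp_pos (- (Rabs c * PI / (8*kap)))).
  set (E1 := exp (- (Rabs c * PI / (4*kap)))) in *. set (E2 := exp (-mu*s)) in *.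
  set (E3 := exp (- (Rabs c * PI / (8*kap)))) in *. set (E4 := exp (-c * xi c kap s y / 2)) in *.
  set (h := hcut (kap * xi c kap s y)) in *.
  assert (th * E1 * E2 * E3 <= th * E1 * E2 * E4).
  { apply Rmult_le_compat_l; auto. repeat apply Rmult_le_pos; lra. }
  assert (th * E1 * E2 * E4 * (1/2) <= th * E1 * E2 * E4 * h).
  { apply Rmult_le_compat_l; auto. repeat apply Rmult_le_pos; lra. }
  assert (th/2 * exp(- Rabs c * PI/(2*kap) - mu*s) <= th/2 * (E1 * E2 * E3)).
  { apply Rmult_le_compat_l; lra. }
  nra.
Qed.

Lemma zsub_fsub A mu c kap s y : Rabs (kap * xi c kap s y) < PI/2 ->
  zsub A mu c kap s y = fsub A mu c kap s y.
Proof. intro H. unfold zsub, fsub. rewrite hcut_eq; auto. Qed.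

Lemma lower_bound (d r a b : R) (u0 v0 : R -> R) (u v : R -> R -> R) :
  0 < d -> 0 < r -> 0 < a < 1 -> 0 < b < 1 ->
  H_infty u0 v0 ->
  is_solution_11 d r a b u0 v0 u v ->
  exists th L, 0 < th <= 1 /\ 0 <= L /\ (forall t x, 0 <= t -> 0 <= u t x <= 1) /\
   forall kap c s y, 0 < kap -> 0 <= s -> Rabs (xi c kap s y) <= PI/(4*kap) ->
     th/2 * exp(- Rabs c * PI/(2*kap) - (L + kap^2 + c^2/4)*s) <= u s y.
Proof.
  intros Hd Hr Ha Hb HH Hsol.
  destruct (sol_bounds d r a b u0 v0 u v Hd Hr Ha Hb HH Hsol) as [M [HM Hbd]].
  destruct HH as [_ [_ [Hu0 [_ [[th [x0 [Hth [_ [Hth1 _]]]]] _]]]]].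
  destruct Hsol as [ut [ux [uxx [vt [vx [vxx [Cu [Cv [Pu [Pv [Iu [Iv _]]]]]]]]]]]].
  destruct Cu as [Cu1 [Cu2 _]].
  assert (Hth1' : th <= 1) by (destruct (Hth1 0 (Rle_refl 0)); lra).
  exists th, M. split; [lra|]. split; [auto|]. split; [intros; apply Hbd; auto|].
  intros kap c s y Hk Hs Hxi.
  assert (Hpi := PI_RGT_0).
  set (A := th * exp (- (Rabs c * PI / (4*kap)))).
  assert (HA : 0 < A) by (unfold A; apply Rmult_lt_0_compat; [auto|apply exp_pos]).
  set (mu := M + kap^2 + c^2/4).
  assert (Hmu : 0 <= mu) by (unfold mu; nra).
  assert (Hcmp : forall t x, 0 <= t -> 0 <= u t x - zsub A mu c kap t x).
  { apply (MP (fun t x => u t x - zsub A mu c kap t x) 1 (-M) (M + th) ltac:(lra)).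
    - apply cont_rel_minus; [exact Cu1| apply zsub_cont].
    - intros t x Ht. assert (zsub A mu c kap t x <= th) by (apply zsub_le; auto).
      destruct (Hbd t x Ht) as [[? ?] _]. lra.
    - intro x. rewrite Iu.
      destruct (Rle_lt_or_eq_dec 0 _ (zsub_nonneg A mu c kap 0 x ltac:(lra))) as [Hz|Hz].
      + assert (Hr0 := zsub_pos_region _ _ _ _ _ _ Hk Hz).
        assert (Hx : x < 0).
        { unfold xi in Hr0. replace (kap * (x - c * 0 + PI / (2 * kap))) with (kap * x + PI/2) in Hr0 by (field; lra).
          revert Hr0. unfold Rabs; destruct Rcase_abs; intros; nra. }
        assert (zsub A mu c kap 0 x <= th) by (apply zsub_le; lra).
        destruct (Hth1 x ltac:(lra)). lra.
      + rewrite <- Hz. destruct (Hu0 x); lra.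
    - intros t x Ht Hneg.
      destruct (Hbd t x ltac:(lra)) as [[Hu1 Hu2] [Hv1 Hv2]].
      assert (Hz : 0 < zsub A mu c kap t x) by lra.
      assert (Hreg := zsub_pos_region _ _ _ _ _ _ Hk Hz).
      set (m := PI/2 - Rabs (kap * xi c kap t x)).
      assert (Hm : 0 < m) by (unfold m; lra).
      destruct (Cu2 t x Ht) as [D1 [D2 D3]].
      set (Ps := A * exp(-mu*t) * exp(-c*xi c kap t x/2)).
      set (Co := cos(kap * xi c kap t x)). set (Si := sin(kap * xi c kap t x)).
      exists (ut t x - Ps * ((-mu + c^2/2)*Co + kap*c*Si)),
             (uxx t x - Ps * ((c^2/4 - kap^2)*Co + c*kap*Si)),
             (fun y => ux t y - fsub_y A mu c kap t y), (m / kap).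
      assert (Hmk : 0 < m / kap) by (apply Rdiv_lt_0_compat; lra).
      assert (Ry : forall yy, Rabs (yy - x) < m / kap -> Rabs (kap * xi c kap t yy) < PI/2).
      { intros yy Hy. unfold xi.
        replace (kap * (yy - c * t + PI / (2 * kap))) with (kap * (yy - x) + kap * xi c kap t x) by (unfold xi; field; lra).
        eapply Rle_lt_trans; [apply Rabs_triang|]. rewrite Rabs_mult, (Rabs_right kap) by lra.
        assert (kap * Rabs (yy - x) < m).
        { apply (Rmult_lt_compat_l kap) in Hy; auto. replace (kap * (m/kap)) with m in Hy by (field; lra). auto. }
        unfold m in *; lra. }
      split; [auto|]. split; [|split; [|split]].
      +
        set (rt := m / (kap * (Rabs c + 1))).
        assert (Hrt : 0 < rt) by (unfold rt; apply Rdiv_lt_0_compat; [lra| assert (0<=Rabs c) by apply Rabs_pos; nra]).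
        apply (deriv_loc (fun s => u s x - fsub A mu c kap s x) _ _ _ rt).
        * apply (deriv_minus (fun s => u s x) (fun s => fsub A mu c kap s x)); [exact D1|apply fsub_ds].
        * exact Hrt.
        * intros s' Hs'. f_equal. symmetry. apply zsub_fsub.
          unfold xi. replace (kap * (x - c * s' + PI / (2 * kap))) with (- kap * c * (s' - t) + kap * xi c kap t x) by (unfold xi; field; lra).
          eapply Rle_lt_trans; [apply Rabs_triang|].
          assert (Rabs (- kap * c * (s' - t)) < m).
          { rewrite !Rabs_mult, Rabs_Ropp, (Rabs_right kap) by lra.
            assert (Hc0 := Rabs_pos c). assert (Hst := Rabs_pos (s' - t)).
            assert (Rabs (s'-t) * (kap * (Rabs c + 1)) < m).
            { apply (Rmult_lt_compat_r (kap * (Rabs c + 1))) in Hs'; [|nra].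
              unfold rt in Hs'. replace (m / (kap * (Rabs c + 1)) * (kap * (Rabs c + 1))) with m in Hs' by (field; nra). auto. }
            nra. }
          unfold m in *; lra.
      + intros yy Hy.
        apply (deriv_loc (fun y => u t y - fsub A mu c kap t y) _ _ _ (m/kap - Rabs (yy - x))).
        * apply (deriv_minus (fun y => u t y) (fun y => fsub A mu c kap t y)).
          destruct (Cu2 t yy Ht) as [_ [E _]]. exact E. apply fsub_dy.
        * lra.
        * intros y' Hy'. f_equal. symmetry. apply zsub_fsub. apply Ry.
          replace (y' - x) with ((y' - yy) + (yy - x)) by ring.
          eapply Rle_lt_trans; [apply Rabs_triang|]. lra.
      + apply (deriv_minus (ux t) (fun y => fsub_y A mu c kap t y)); [exact D3|apply fsub_dyy].
      + rewrite zsub_fsub by auto.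
        replace (ut t x - Ps * ((- mu + c ^ 2 / 2) * Co + kap * c * Si) -
                 1 * (uxx t x - Ps * ((c ^ 2 / 4 - kap ^ 2) * Co + c * kap * Si)))
          with ((ut t x - uxx t x) + M * (Ps * Co)) by (unfold mu; field).
        rewrite Pu by auto.
        replace (fsub A mu c kap t x) with (Ps * Co) by reflexivity.
        assert (0 <= a * v t x <= M) by nra.
        assert (0 <= u t x * (1 - u t x - a * v t x + M)) by (apply Rmult_le_pos; lra).
        nra. }
  specialize (Hcmp s y Hs).
  assert (th/2 * exp(- Rabs c * PI/(2*kap) - mu*s) <= zsub A mu c kap s y) by (apply zsub_ge; auto).
  unfold mu in *. lra.
Qed.

Lemma ln_le' x y : 0 < x -> x <= y -> ln x <= ln y.
Proof. intros H [H1| ->]; [left; apply ln_increasing; auto| lra]. Qed.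

Definition kf (p : R * R) : R :=
  if Rlt_dec 0 (fst p) then 1 else if Rlt_dec (snd p) 0 then - PI / (2 * snd p) else 1.
Definition cf (p : R * R) : R :=
  if Rlt_dec 0 (fst p) then (snd p + PI/2) / fst p else 0.
Definition Uf (p : R * R) (q : R * R) : Prop :=
  Rabs (snd q - cf p * fst q + PI/(2*kf p)) < PI/(4*kf p) /\ Rabs (fst q) < Rabs (fst p) + 1.

Lemma kf_pos p : 0 < kf p.
Proof.
  assert (Hpi := PI_RGT_0). unfold kf. destruct Rlt_dec; [lra|]. destruct Rlt_dec; [|lra].
  replace (- PI / (2 * snd p)) with (PI / (2 * (- snd p))) by (field; lra).
  apply Rdiv_lt_0_compat; lra.
Qed.

Lemma Uf_open p : open2 (Uf p).
Proof.
  intros q [H1 H2]. assert (Hk := kf_pos p).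
  set (m1 := PI/(4*kf p) - Rabs (snd q - cf p * fst q + PI/(2*kf p))).
  set (m2 := Rabs (fst p) + 1 - Rabs (fst q)).
  assert (Hc := Rabs_pos (cf p)).
  exists (Rmin (m1 / (2 * (Rabs (cf p) + 1))) (m2/2)). split.
  { apply Rmin_pos; [apply Rdiv_lt_0_compat; unfold m1; lra| unfold m2; lra]. }
  intros q' Ht Hx.
  assert (He1 : Rmin (m1 / (2 * (Rabs (cf p) + 1))) (m2/2) <= m1 / (2 * (Rabs (cf p) + 1))) by apply Rmin_l.
  assert (He2 : Rmin (m1 / (2 * (Rabs (cf p) + 1))) (m2/2) <= m2/2) by apply Rmin_r.
  set (e := Rmin (m1 / (2 * (Rabs (cf p) + 1))) (m2/2)) in *.
  split.
  - replace (snd q' - cf p * fst q' + PI / (2 * kf p)) with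
      ((snd q - cf p * fst q + PI / (2 * kf p)) + ((snd q' - snd q) - cf p * (fst q' - fst q))) by ring.
    eapply Rle_lt_trans; [apply Rabs_triang|].
    assert (Rabs ((snd q' - snd q) - cf p * (fst q' - fst q)) < m1).
    { unfold Rminus at 1. eapply Rle_lt_trans; [apply Rabs_triang|].
      rewrite Rabs_Ropp, Rabs_mult.
      assert (Rabs (cf p) * Rabs (fst q' - fst q) <= Rabs (cf p) * e) by (apply Rmult_le_compat_l; lra).
      assert (e * (2 * (Rabs (cf p) + 1)) <= m1).
      { replace m1 with (m1 / (2 * (Rabs (cf p) + 1)) * (2 * (Rabs (cf p) + 1))) by (field; lra).
        apply Rmult_le_compat_r; lra. }
      assert (0 < m1) by (unfold m1; lra). nra. }
    unfold m1 in *; lra.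
  - replace (fst q') with (fst q + (fst q' - fst q)) by ring.
    eapply Rle_lt_trans; [apply Rabs_triang|]. unfold m2 in *; lra.
Qed.

Lemma Uf_self p : (0 < fst p \/ (fst p = 0 /\ snd p < 0)) -> Uf p p.
Proof.
  intros H. assert (Hk := kf_pos p). assert (Hpi := PI_RGT_0). split; [|lra].
  replace (snd p - cf p * fst p + PI / (2 * kf p)) with 0.
  { rewrite Rabs_R0. apply Rdiv_lt_0_compat; lra. }
  unfold cf, kf. destruct (Rlt_dec 0 (fst p)).
  - field. lra.
  - destruct H as [H|[H1 H2]]; [lra|]. destruct (Rlt_dec (snd p) 0); [|lra]. rewrite H1. field. split; lra.
Qed.

Fixpoint sumabs (f : R * R -> R) (l : list (R * R)) : R :=
  match l with nil => 0 | cons i l' => Rabs (f i) + sumabs f l' end.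

Lemma sumabs_pos f l : 0 <= sumabs f l.
Proof. induction l; simpl; [lra|]. assert (0 <= Rabs (f a)) by apply Rabs_pos. lra. Qed.

Lemma sumabs_ge f l i : In i l -> f i <= sumabs f l.
Proof.
  induction l; simpl; [tauto|]. intros [->|H].
  - assert (f i <= Rabs (f i)) by apply RRle_abs. assert (Hs := sumabs_pos f l). lra.
  - specialize (IHl H). assert (0 <= Rabs (f a)) by apply Rabs_pos. lra.
Qed.

Theorem lemma3p2 (d r a b : R) (u0 v0 : R -> R) (u v : R -> R -> R) :
  0 < d -> 0 < r -> 0 < a < 1 -> 0 < b < 1 ->
  H_infty u0 v0 ->
  is_solution_11 d r a b u0 v0 u v ->
  forall Q : R * R -> Prop,
    compact2 Q ->
    (forall t x, Q (t, x) -> 0 < t \/ (t = 0 /\ x < 0)) ->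
    exists C, 0 < C /\
      forall eps, 0 < eps -> eps <= 1 / C ->
        forall t x, Q (t, x) ->
          0 < u (t / eps) (x / eps) /\
          0 <= - eps * ln (u (t / eps) (x / eps)) <= C.
Proof.
  intros Hd Hr Ha Hb HH Hsol Q HQ HQp.
  destruct (lower_bound d r a b u0 v0 u v Hd Hr Ha Hb HH Hsol) as [th [L [Hth [HL [Hu LB]]]]].
  destruct (HQ (R * R)%type Uf Uf_open) as [l Hl].
  { intros p Hp. exists p. apply Uf_self. destruct p as [t x]. apply HQp; auto. }
  set (Cf := fun p : R * R => - ln (th/2) + Rabs (cf p) * PI / (2 * kf p)
              + (L + kf p ^ 2 + cf p ^ 2 / 4) * (Rabs (fst p) + 1)).
  set (C := 1 + sumabs Cf l).
  assert (HC1 : 1 <= C) by (unfold C; assert (H := sumabs_pos Cf l); lra).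
  exists C. split; [lra|].
  intros eps He HeC t x HQtx.
  assert (He1 : eps <= 1).
  { eapply Rle_trans; [exact HeC|]. unfold Rdiv. rewrite Rmult_1_l.
    rewrite <- Rinv_1. apply Rinv_le_contravar; lra. }
  destruct (Hl (t, x) HQtx) as [p [Hpl [HU1 HU2]]]. simpl in HU1, HU2.
  assert (Ht : 0 <= t) by (destruct (HQp t x HQtx) as [|[]]; lra).
  assert (Hk := kf_pos p). assert (Hpi := PI_RGT_0).
  set (k := kf p) in *. set (c := cf p) in *.
  assert (Hkap : 0 < eps * k) by nra.
  assert (Hxi : Rabs (xi c (eps*k) (t/eps) (x/eps)) <= PI / (4 * (eps * k))).
  { replace (xi c (eps*k) (t/eps) (x/eps)) with (/eps * (x - c * t + PI / (2 * k))) by (unfold xi; field; lra).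
    rewrite Rabs_mult, (Rabs_right (/eps)) by (left; apply Rinv_0_lt_compat; lra).
    replace (PI / (4 * (eps * k))) with (/eps * (PI / (4 * k))) by (field; lra).
    apply Rmult_le_compat_l; [left; apply Rinv_0_lt_compat; lra| lra]. }
  assert (Hts : 0 <= t / eps) by (apply Rdiv_le_0_compat; lra).
  specialize (LB (eps*k) c (t/eps) (x/eps) Hkap Hts Hxi).
  set (E := - Rabs c * PI / (2 * (eps * k)) - (L + (eps * k) ^ 2 + c ^ 2 / 4) * (t / eps)) in *.
  assert (Hlb : 0 < th / 2 * exp E) by (apply Rmult_lt_0_compat; [lra|apply exp_pos]).
  assert (Hupos : 0 < u (t/eps) (x/eps)) by lra.
  split; [exact Hupos|].
  destruct (Hu (t/eps) (x/eps) Hts) as [_ Hu1].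
  split.
  - assert (ln (u (t/eps) (x/eps)) <= 0) by (rewrite <- ln_1; apply ln_le'; lra). nra.
  - assert (Hln : ln (th/2) + E <= ln (u (t/eps) (x/eps))).
    { rewrite <- (ln_exp E), <- ln_mult by (try apply exp_pos; lra). apply ln_le'; auto. }
    assert (HlnE : - eps * E = Rabs c * PI / (2 * k) + (L + (eps * k) ^ 2 + c ^ 2 / 4) * t).
    { unfold E. field. lra. }
    assert (Hth2 : ln (th/2) <= 0) by (rewrite <- ln_1; apply ln_le'; lra).
    assert (Hi : Cf p <= sumabs Cf l) by (apply sumabs_ge; auto).
    assert (Htt : t < Rabs (fst p) + 1) by (assert (t <= Rabs t) by apply RRle_abs; lra).
    assert (Hk2 : (eps*k)^2 <= k^2).
    { assert (eps*eps <= 1) by nra. assert (0 <= k*k) by nra.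
      replace ((eps*k)^2) with ((eps*eps)*(k*k)) by ring. replace (k^2) with (1*(k*k)) by ring.
      apply Rmult_le_compat_r; lra. }
    assert (Hm : (L + (eps * k) ^ 2 + c ^ 2 / 4) * t <= (L + k ^ 2 + c ^ 2 / 4) * (Rabs (fst p) + 1)).
    { assert (0 <= c^2/4) by nra. assert (0 <= (eps*k)^2) by nra.
      apply Rmult_le_compat; lra. }
    assert (- eps * ln (u (t / eps) (x / eps)) <= - eps * (ln (th/2) + E)) by nra.
    assert (- eps * ln (th/2) <= - ln (th/2)) by nra.
    assert (HCf : Cf p = - ln (th/2) + Rabs c * PI / (2 * k) + (L + k ^ 2 + c ^ 2 / 4) * (Rabs (fst p) + 1)) by reflexivity.
    unfold C. lra.
Qed.
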